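(* There exists a one-sided non-adaptive tester for $k$-monotonicity of functions $f\colon\{0,1\}^d\to\{0,1\}$ with query complexity $q(d,\varepsilon,k)=2^{O(\sqrt{d}\cdot\log d\cdot\log(1/\varepsilon))}$ (in particular, independent of $k$).
   Context: The hypercube $\{0,1\}^d$ is ordered coordinatewise. A function $f\colon\{0,1\}^d\to\{0,1\}$ is $k$-monotone if there is no chain $x_1\preceq\cdots\preceq x_{k+1}$ with $f(x_1)=1$ and $f(x_i)\neq f(x_{i+1})$ for all $i\in[k]$. Distance is the normalized Hamming distance $\Pr_x[f(x)\neq g(x)]$ over uniform $x$; $f$ is $\varepsilon$-far from $k$-monotone if its distance to every $k$-monotone function is at least $\varepsilon$. A tester, given $\varepsilon$ and query access to $f$, accepts $k$-monotone $f$ with probability at least $2/3$ and rejects $\varepsilon$-far $f$ with probability at least $2/3$; it is one-sided if it accepts $k$-monotone functions with probability $1$, and non-adaptive if its queries do not depend on previous answers. *)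

(* Defs.v *)
From HB Require Import structures.
From mathcomp Require Import all_boot all_order all_algebra.
From mathcomp Require Import reals.
From mathcomp Require Import sequences exp.
Set Implicit Arguments. Unset Strict Implicit. Unset Printing Implicit Defensive.
Import Order.TTheory GRing.Theory Num.Theory.
Local Open Scope ring_scope.

Definition cube (d : nat) := {ffun 'I_d -> bool}.

Definition cube_le (d : nat) (x y : cube d) : bool := [forall i, x i ==> y i].

Definition k_monotone (d k : nat) (f : cube d -> bool) : Prop :=
  ~ exists c : nat -> cube d,
      [/\ f (c 0%N) = true,
          forall i, (i < k)%N -> cube_le (c i) (c i.+1)
        & forall i, (i < k)%N -> f (c i) != f (c i.+1)].

Definition dist (R : numFieldType) (d : nat) (f g : cube d -> bool) : R :=
  (#|[pred x : cube d | f x != g x]|%:R) / ((2 ^ d)%N%:R).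

Definition far_from_k_monotone (R : numFieldType) (d k : nat) (eps : R)
    (f : cube d -> bool) : Prop :=
  forall g : cube d -> bool, k_monotone k g -> eps <= dist R f g.

(* A randomized non-adaptive algorithm making q queries: a finite probability
   space of seeds Om with weights p; on seed w it queries the points Q w i
   (i < q), fixed independently of f, and outputs D w (answers). *)
Definition accept_prob (R : numFieldType) (d q : nat) (Om : finType)
    (p : Om -> R) (Q : Om -> 'I_q -> cube d) (D : Om -> ('I_q -> bool) -> bool)
    (f : cube d -> bool) : R :=
  \sum_(w : Om | D w (fun i => f (Q w i))) p w.

Definition one_sided_na_tester (R : numFieldType) (d k : nat) (eps : R) (q : nat)
    (Om : finType) (p : Om -> R) (Q : Om -> 'I_q -> cube d)
    (D : Om -> ('I_q -> bool) -> bool) : Prop :=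
  [/\ forall w, 0 <= p w,
      \sum_(w : Om) p w = 1,
      (forall f, k_monotone k f -> accept_prob p Q D f = 1)
    & (forall f, far_from_k_monotone k eps f -> accept_prob p Q D f <= 1 / 3%:R)].

(* Main.v *)
Require Import Defs.
From HB Require Import structures.
From mathcomp Require Import all_boot all_order all_algebra.
From mathcomp Require Import reals.
From mathcomp Require Import sequences exp.
From mathcomp Require Import boolp.
From mathcomp Require Import ring lra zify.
From mathcomp Require Import archimedean.
Import Order.TTheory GRing.Theory Num.Theory.
Local Open Scope ring_scope.
Set Implicit Arguments. Unset Strict Implicit. Unset Printing Implicit Defensive.


Section Chains.
Variables (d k : nat) (f : cube d -> bool).

Lemma cle_refl (x : cube d) : cube_le x x.
Proof. by apply/forallP => i; rewrite implybb. Qed.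

Lemma cle_trans (x y z : cube d) : cube_le x y -> cube_le y z -> cube_le x z.
Proof.
move=> /forallP H1 /forallP H2; apply/forallP => i; apply/implyP => hx.
by move: (H1 i) (H2 i); rewrite hx /= => -> .
Qed.

Definition altch (c : nat -> cube d) (j : nat) :=
  (forall i, (i < j)%N -> cube_le (c i) (c i.+1)) /\
  (forall i, (i < j)%N -> f (c i) != f (c i.+1)).

Lemma altch_le c j i i' : altch c j -> (i <= i')%N -> (i' <= j)%N -> cube_le (c i) (c i').
Proof.
move=> [H1 _] + hi'; elim: i' hi' => [|i' IH] hi'.
  by rewrite leqn0 => /eqP ->; apply: cle_refl.
rewrite leq_eqVlt => /orP [/eqP -> | hii']; first by apply: cle_refl.
apply: cle_trans (IH (ltnW hi') hii') (H1 _ hi').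
Qed.

Lemma altch_val c j i : altch c j -> f (c 0%N) = true -> (i <= j)%N -> f (c i) = ~~ odd i.
Proof.
move=> [_ H2] h0; elim: i => [|i IH] hi //=.
have := H2 i hi; rewrite (IH (ltnW hi)).
by case: (f (c i.+1)); case: (odd i).
Qed.

Lemma altch_trunc c j j' : altch c j -> (j' <= j)%N -> altch c j'.
Proof.
move=> [H1 H2] hj; split => i hi; [apply: H1 | apply: H2]; exact: leq_trans hi hj.
Qed.

Definition inA (A : {set cube d}) (c : nat -> cube d) j := forall i, (i <= j)%N -> c i \in A.

Definition viol (A : {set cube d}) (c : nat -> cube d) :=
  [/\ f (c 0%N) = true, inA A c k & altch c k].

Section Ext.
Variable A : {set cube d}.
Hypothesis noviol : ~ exists c, viol A c.

Definition P x j := exists c, [/\ f (c 0%N) = true, inA A c j, altch c j & cube_le (c j) x].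

Lemma P_lt x j : P x j -> (j < k)%N.
Proof.
move=> [c [h0 hA hc _]]; rewrite ltnNge; apply/negP => hkj.
apply: noviol; exists c; split => //; last exact: altch_trunc hc hkj.
by move=> i hi; apply: hA; exact: leq_trans hi hkj.
Qed.

Lemma P_down x j j' : P x j -> (j' <= j)%N -> P x j'.
Proof.
move=> [c [h0 hA hc hx]] hj; exists c; split => //.
- by move=> i hi; apply: hA; exact: leq_trans hi hj.
- exact: altch_trunc hc hj.
- exact: cle_trans (altch_le hc hj (leqnn _)) hx.
Qed.

Lemma P_mono x y j : P x j -> cube_le x y -> P y j.
Proof.
move=> [c [h0 hA hc hx]] hxy; exists c; split => //; exact: cle_trans hx hxy.
Qed.

Lemma P_max x j : P x j -> exists m, [/\ (j <= m)%N, P x m & ~ P x m.+1].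
Proof.
move=> hP.
suff H : forall n j, (k - j)%N = n -> P x j -> exists m, [/\ (j <= m)%N, P x m & ~ P x m.+1].
  exact: H erefl hP.
elim => [|n IH] {}j hn {}hP; have hk := P_lt hP.
  by move: hn => /eqP; rewrite subn_eq0 leqNgt hk.
case: (EM (P x j.+1)) => hj.
  have e : (k - j.+1)%N = n by rewrite subnS hn.
  have [m [h1 h2 h3]] := IH j.+1 e hj.
  by exists m; split => //; exact: ltnW.
by exists j; split.
Qed.

Lemma P_uniq x m m' : P x m -> ~ P x m.+1 -> P x m' -> ~ P x m'.+1 -> m = m'.
Proof.
move=> h1 h2 h3 h4; apply/eqP; rewrite eqn_leq; apply/andP; split.
  rewrite leqNgt; apply/negP => hlt; exact: h4 (P_down h1 hlt).
rewrite leqNgt; apply/negP => hlt; exact: h2 (P_down h3 hlt).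
Qed.

Definition gext (x : cube d) : bool := `[< exists m, [/\ P x m, ~ P x m.+1 & ~~ odd m] >].

Lemma gext_val x m : P x m -> ~ P x m.+1 -> gext x = ~~ odd m.
Proof.
move=> h1 h2; apply/idP/idP.
  move/asboolP => [m' [h1' h2' h3']]; by rewrite (P_uniq h1 h2 h1' h2').
by move=> ho; apply/asboolP; exists m.
Qed.

Lemma gext_noP x : ~ P x 0%N -> gext x = false.
Proof.
move=> hn; apply/negP => /asboolP [m [h1 _ _]]; apply: hn; exact: P_down h1 (leq0n _).
Qed.

Lemma P_extend x j a : P x j -> a \in A -> cube_le x a -> f a = odd j -> P a j.+1.
Proof.
move=> [c [h0 hA hc hx]] ha hxa hfa.
pose c' := fun i => if i == j.+1 then a else c i.
have ec : forall i, (i <= j)%N -> c' i = c i.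
  by move=> i hi; rewrite /c' ifF //; apply/negbTE; rewrite neq_ltn ltnS hi.
have hcv := altch_val hc h0.
exists c'; split.
- by rewrite ec.
- move=> i; rewrite leq_eqVlt => /orP [/eqP ->| hi]; first by rewrite /c' eqxx.
  by rewrite ec //; apply: hA.
- split => i; rewrite ltnS leq_eqVlt => /orP [/eqP ->| hi].
  + by rewrite ec // /c' eqxx; exact: cle_trans hx hxa.
  + by rewrite (ec i (ltnW hi)) (ec i.+1 hi); case: hc => H1 _; apply: H1.
  + by rewrite ec // /c' eqxx hcv // hfa; case: (odd j).
  + by rewrite (ec i (ltnW hi)) (ec i.+1 hi); case: hc => _ H2; apply: H2.
- by rewrite /c' eqxx; apply: cle_refl.
Qed.

Lemma gext_ext a : a \in A -> gext a = f a.
Proof.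
move=> ha; case: (EM (P a 0%N)) => hP0.
  have [m [_ h1 h2]] := P_max hP0.
  rewrite (gext_val h1 h2).
  case hf: (f a); case ho: (odd m) => //=.
  - exfalso; apply: h2; apply: P_extend h1 ha (cle_refl _) _; by rewrite hf ho.
  - exfalso; apply: h2; apply: P_extend h1 ha (cle_refl _) _; by rewrite hf ho.
rewrite gext_noP //; case hf: (f a) => //; exfalso; apply: hP0.
exists (fun _ => a); split.
- exact hf.
- by move=> i _.
- by split => i; rewrite ltn0.
- exact: cle_refl.
Qed.

Lemma gext_kmono : k_monotone k gext.
Proof.
move=> [c [h0 hle hne]].
have hP0 : P (c 0%N) 0%N.
  by case: (EM (P (c 0%N) 0%N)) => // hn; move: h0; rewrite gext_noP.
have hQ : forall i, (i <= k)%N -> exists m,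
    [/\ (i <= m)%N, P (c i) m, ~ P (c i) m.+1 & gext (c i) = ~~ odd m].
  elim => [|i IH] hi.
    have [m [h1 h2 h3]] := P_max hP0.
    by exists m; split => //; apply: gext_val.
  have [m [h1 h2 h3 h4]] := IH (ltnW hi).
  have hP' : P (c i.+1) m := P_mono h2 (hle i hi).
  have [m' [h1' h2' h3']] := P_max hP'.
  exists m'; split => //; last exact: gext_val.
  have hmm : m != m'.
    apply/negP => /eqP em; subst m'.
    by move: (hne i hi); rewrite h4 (gext_val h2' h3') eqxx.
  have hlt : (m < m')%N by rewrite ltn_neqAle hmm h1'.
  exact: leq_ltn_trans h1 hlt.
have [m [h1 h2 _ _]] := hQ k (leqnn _).
by move: (P_lt h2); rewrite ltnNge h1.
Qed.

Lemma extension : exists g, k_monotone k g /\ forall a, a \in A -> g a = f a.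
Proof. exists gext; split; [exact: gext_kmono | exact: gext_ext]. Qed.
End Ext.

Definition Bot (A : {set cube d}) : {set cube d} :=
  [set x | `[< exists c, viol A c /\ c 0%N = x >]].

Lemma removal n (A : {set cube d}) : (#|A| <= n)%N ->
  exists g, k_monotone k g /\
    (#|[set x | f x != g x]| <= #|~: A| + k.+1 * #|Bot A|)%N.
Proof.
elim: n A => [|n IH] A hA; case: (EM (exists c, viol A c)) => hv.
- exfalso; case: hv => c [_ hin _]; have := hin 0%N (leq0n _).
  by move: hA; rewrite leqn0 cards_eq0 => /eqP ->; rewrite inE.
- have [g [hg hgA]] := extension hv; exists g; split => //.
  apply: leq_trans (leq_addr _ _); apply: subset_leq_card; apply/subsetP => x.
  rewrite !inE; apply: contraNN => hx; by rewrite hgA // eqxx.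
- case: hv => c hc.
  pose S := [set c (nat_of_ord i) | i : 'I_k.+1].
  have hS : (#|S| <= k.+1)%N by apply: leq_trans (leq_imset_card _ _) _; rewrite card_ord.
  have c0S : c 0%N \in S by apply/imsetP; exists ord0.
  have c0A : c 0%N \in A by case: hc => _ hin _; apply: hin.
  have c0B : c 0%N \in Bot A by rewrite inE; apply/asboolP; exists c.
  have hA' : (#|A :\: S| <= n)%N.
    have : (#|A :\: S| <= #|A :\ c 0%N|)%N.
      apply: subset_leq_card; apply/subsetP => x; rewrite !inE.
      case/andP => hxS ->; rewrite andbT; apply: contraNN hxS => /eqP ->; exact: c0S.
    by move: hA; rewrite (cardsD1 (c 0%N) A) c0A add1n ltnS => h1 h2; exact: leq_trans h2 h1.
  have [g [hg hcnt]] := IH _ hA'.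
  exists g; split => //; apply: (leq_trans hcnt).
  have hC : (#|~: (A :\: S)| <= #|~: A| + k.+1)%N.
    rewrite setCD; apply: leq_trans (leq_card_setU _ _) _; exact: leq_add.
  have hB : (#|Bot (A :\: S)| < #|Bot A|)%N.
    have : (#|Bot (A :\: S)| <= #|Bot A :\ c 0%N|)%N.
      apply: subset_leq_card; apply/subsetP => x; rewrite !inE.
      move/asboolP => [c' [[h0' hin' hc'] e']]; apply/andP; split.
        apply/negP => /eqP ex; rewrite -e' in ex.
        have := hin' 0%N (leq0n _); by rewrite ex !inE c0S.
      apply/asboolP; exists c'; split => //; split => // i hi.
      by have := hin' i hi; rewrite inE => /andP [].
    by rewrite (cardsD1 (c 0%N) (Bot A)) c0B add1n ltnS.
  move: hC hB; set a1 := #|~: (A :\: S)|; set a2 := #|~: A|.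
  set b1 := #|Bot (A :\: S)|; set b2 := #|Bot A| => hC hB.
  have : (k.+1 * b1.+1 <= k.+1 * b2)%N by rewrite leq_mul2l hB orbT.
  rewrite mulnS => hm; apply: leq_trans (leq_add hC (leqnn _)) _.
  by rewrite -addnA leq_add2l.
- have [g [hg hgA]] := extension hv; exists g; split => //.
  apply: leq_trans (leq_addr _ _); apply: subset_leq_card; apply/subsetP => x.
  rewrite !inE; apply: contraNN => hx; by rewrite hgA // eqxx.
Qed.
End Chains.


Section Weights.
Variable R : realFieldType.

Definition wt d (x : cube d) : nat := (\sum_i (x i : nat))%N.

Lemma gen_fun d (z : R) : \sum_(x : cube d) z ^+ wt x = (1 + z) ^+ d.
Proof.
have -> : (1 + z) ^+ d = \prod_(i : 'I_d) \sum_(b : bool) z ^+ b.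
  rewrite prodr_const card_ord; congr (_ ^+ _).
  by rewrite big_bool /= expr1 expr0 addrC.
rewrite bigA_distr_bigA /=; apply: eq_bigr => x _.
by rewrite /wt prodrXr.
Qed.

Lemma bernoulli (x : R) n : -1 <= x -> 1 + n%:R * x <= (1 + x) ^+ n.
Proof.
move=> hx; elim: n => [|n IH]; first by rewrite mul0r addr0 expr0.
rewrite exprS; have h1 : 0 <= 1 + x by lra.
have := ler_wpM2l h1 IH.
have : 0 <= n%:R * x * x by rewrite -mulrA mulr_ge0 // ?ler0n // -expr2 sqr_ge0.
rewrite -natr1; nra.
Qed.

Lemma exp_small (x : R) n : 0 <= x -> n%:R * x <= 1 -> (1 + x) ^+ n * (1 - n%:R * x) <= 1.
Proof.
move=> hx hnx; case: n hnx => [|n] hnx; first by rewrite expr0 mul0r subr0 mul1r.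
have hx1 : x <= 1.
  have : x <= n.+1%:R * x by rewrite ler_peMl // ler1n.
  lra.
have hb := bernoulli n.+1 (_ : -1 <= - x).
have hb' : 1 - n.+1%:R * x <= (1 - x) ^+ n.+1.
  by have := hb ltac:(lra); rewrite mulrN.
have hpos : 0 <= (1 + x) ^+ n.+1 by apply: exprn_ge0; lra.
apply: le_trans (ler_wpM2l hpos hb') _.
rewrite -exprMn.
have h0 : 0 <= (1 + x) * (1 - x) by nra.
have h1 : (1 + x) * (1 - x) <= 1 by nra.
by apply: exprn_ile1.
Qed.

Lemma count_le_sum d (S : {set cube d}) (F : cube d -> R) (m : R) :
  (forall x, 0 <= F x) -> (forall x, x \in S -> m <= F x) ->
  #|S|%:R * m <= \sum_(x : cube d) F x.
Proof.
move=> hF hS; rewrite (bigID (mem S)) /=.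
have h2 : 0 <= \sum_(x | x \notin S) F x by apply: sumr_ge0.
have h1 : #|S|%:R * m <= \sum_(x | x \in S) F x.
  rewrite mulr_natl -sumr_const; apply: ler_sum => x hx; exact: hS.
lra.
Qed.

Lemma upper_tail_R d N b : (0 < N)%N -> (d <= N * N)%N ->
  #|[set x : cube d | (d + 2 * b * N <= 2 * wt x)%N]|%:R * 4%:R ^+ b <= 2%:R ^+ d.+1 :> R.
Proof.
move=> hN hdN.
set S := [set x : cube d | _].
have nN : 1 <= N%:R :> R by rewrite ler1n.
set t : R := N%:R^-1.
have t0 : 0 < t by rewrite invr_gt0; lra.
have t1 : t <= 1 by rewrite invf_le1 //; lra.
have Nt : N%:R * t = 1 by rewrite mulfV //; apply/eqP => h; lra.
set z := 1 + t.
have z0 : 0 < z by rewrite /z; lra.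
have hA : #|S|%:R * z ^+ (d + 2 * b * N) <= (1 + z ^+ 2) ^+ d.
  rewrite -gen_fun; apply: count_le_sum => [x|x]; first by apply: exprn_ge0; nra.
  rewrite inE -exprM mulnC => hx; apply: ler_weXn2l => //; rewrite /z; lra.
have hB : #|S|%:R * z ^+ (2 * b * N) <= (z + z^-1) ^+ d.
  have zn0 : z != 0 by apply/eqP => h; lra.
  have e : 1 + z ^+ 2 = z * (z + z^-1) by rewrite mulrDr mulfV // -expr2 addrC.
  rewrite e exprMn exprD mulrCA in hA.
  by rewrite -(ler_pM2l (exprn_gt0 d z0)).
have hzi : z^-1 <= 1 - t + t ^+ 2.
  rewrite -[z^-1]mulr1 ler_pdivrMl //.
  have : 0 <= t ^+ 3 by apply: exprn_ge0; lra.
  rewrite /z; nra.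
have hC : z + z^-1 <= 2 * (1 + t ^+ 2 / 2) by rewrite /z; lra.
have hdx : d%:R * (t ^+ 2 / 2) <= 1 / 2.
  have : d%:R <= N%:R * N%:R :> R by rewrite -natrM ler_nat.
  have : 0 <= t ^+ 2 by apply: exprn_ge0; lra.
  rewrite expr2; nra.
have hD : (z + z^-1) ^+ d <= 2%:R ^+ d.+1.
  have hx0 : 0 <= t ^+ 2 / 2 by apply: divr_ge0 => //; apply: exprn_ge0; lra.
  have hs := @exp_small _ d hx0 ltac:(lra).
  have hpos : 0 <= (1 + t ^+ 2 / 2) ^+ d by apply: exprn_ge0; lra.
  have h2 : (1 + t ^+ 2 / 2) ^+ d <= 2 by nra.
  have zi0 : 0 < z^-1 by rewrite invr_gt0.
  have h3 : (z + z^-1) ^+ d <= (2 * (1 + t ^+ 2 / 2)) ^+ d.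
    apply: lerXn2r => //; rewrite nnegrE; lra.
  apply: (le_trans h3).
  rewrite exprMn (exprSr 2 d); apply: ler_wpM2l => //; apply: exprn_ge0; lra.
have hE : 4%:R ^+ b <= z ^+ (2 * b * N).
  have hzN : 2 <= z ^+ N.
    have := bernoulli N (_ : -1 <= t); rewrite Nt => h; apply: le_trans (h _); lra.
  have e1 : z ^+ (2 * b * N) = (z ^+ N) ^+ (2 * b) by rewrite -exprM mulnC.
  have e2 : 4%:R ^+ b = (2:R) ^+ (2 * b) by rewrite exprM expr2 -natrM.
  rewrite e1 e2; apply: lerXn2r => //; rewrite nnegrE; lra.
have hc : 0 <= #|S|%:R :> R by apply: ler0n.
apply: le_trans (le_trans hB hD).
by apply: ler_wpM2l.
Qed.

Lemma mask_count_R d s : (0 < d)%N ->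
  #|[set m : cube d | (wt m <= s)%N]|%:R <= 2 * (2 * d)%:R ^+ s :> R.
Proof.
move=> hd; set S := [set m : cube d | _].
have dpos : 1 <= d%:R :> R by rewrite ler1n.
set z : R := (2 * d)%:R^-1.
have hz0 : 0 < (2 * d)%:R :> R by rewrite natrM; nra.
have z0 : 0 < z by rewrite invr_gt0.
have z1 : z <= 1 by rewrite invf_le1 // natrM; nra.
have dz : d%:R * z = 1 / 2.
  rewrite /z natrM invfM mulrCA mulfV ?mulr1 ?div1r //; apply/eqP => h; lra.
have hA : #|S|%:R * z ^+ s <= 2.
  apply: le_trans (_ : \sum_(x : cube d) z ^+ wt x <= 2).
    apply: count_le_sum => [x|x]; first by apply: exprn_ge0; lra.
    by rewrite inE => hx; apply: ler_wiXn2l => //; lra.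
  rewrite gen_fun.
  have := @exp_small _ d (ltW z0) ltac:(lra); rewrite dz.
  have : 0 <= (1 + z) ^+ d by apply: exprn_ge0; lra.
  nra.
have e : z ^+ s * (2 * d)%:R ^+ s = 1 by rewrite -exprMn mulVf ?expr1n //; apply/eqP => h; lra.
have hp : 0 <= (2 * d)%:R ^+ s :> R by apply: exprn_ge0; lra.
have := ler_wpM2r hp hA; rewrite -mulrA e mulr1 //.
Qed.
End Weights.

Lemma upper_tail d N b : (0 < N)%N -> (d <= N * N)%N ->
  (#|[set x : cube d | (d + 2 * b * N <= 2 * wt x)%N]| * 4 ^ b <= 2 ^ d.+1)%N.
Proof.
move=> hN hdN; have := upper_tail_R rat b hN hdN.
by rewrite -!natrX -natrM ler_nat.
Qed.

Lemma mask_count d s : (0 < d)%N -> (#|[set m : cube d | (wt m <= s)%N]| <= 2 * (2 * d) ^ s)%N.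
Proof.
move=> hd; have := mask_count_R rat s hd.
by rewrite -!natrX -natrM ler_nat.
Qed.

Definition cneg d (x : cube d) : cube d := [ffun i => ~~ x i].

Lemma wt_cneg d (x : cube d) : (wt x + wt (cneg x) = d)%N.
Proof.
rewrite /wt -big_split /= -[d in RHS]card_ord -sum1_card; apply: eq_bigr => i _.
by rewrite ffunE; case: (x i).
Qed.

Lemma cnegK d : involutive (@cneg d).
Proof. by move=> x; apply/ffunP => i; rewrite !ffunE negbK. Qed.

Definition inband d N b (x : cube d) :=
  ((d <= 2 * wt x + 2 * b * N + 1) && (2 * wt x <= d + 2 * b * N + 1))%N.

Lemma band_out d N b : (0 < N)%N -> (d <= N * N)%N ->
  (#|[set x : cube d | ~~ inband N b x]| * 4 ^ b <= 2 ^ d.+2)%N.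
Proof.
move=> hN hdN; set U := [set x : cube d | (d + 2 * b * N <= 2 * wt x)%N].
have hU := upper_tail b hN hdN.
have hsub : [set x : cube d | ~~ inband N b x] \subset U :|: (@cneg d) @: U.
  apply/subsetP => x; rewrite !inE /inband negb_and -!ltnNge => /orP [h|h].
    apply/orP; right; apply/imsetP; exists (cneg x); last by rewrite cnegK.
    rewrite ?inE; have := wt_cneg x; lia.
  by apply/orP; left; rewrite ?inE; lia.
have := subset_leq_card hsub => h1.
have h2 := leq_card_setU U (@cneg d @: U).
have h3 := leq_imset_card (@cneg d) (mem U).
rewrite expnS.
apply: leq_trans (leq_mul h1 (leqnn _)) _.
apply: leq_trans (leq_mul h2 (leqnn _)) _.
rewrite mulnDl; apply: leq_trans (leq_add (leqnn _) (leq_mul h3 (leqnn _))) _.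
rewrite -/U in hU; have e : #|mem U| = #|U| by apply: eq_card.
rewrite e; lia.
Qed.

Section Geom.
Variable d : nat.

Definition cjoin (x m : cube d) : cube d := [ffun l => x l || m l].
Definition cmask (x y : cube d) : cube d := [ffun l => y l && ~~ x l].

Lemma cjoin_mask (x y : cube d) : cube_le x y -> cjoin x (cmask x y) = y.
Proof.
move=> /forallP h; apply/ffunP => l; rewrite !ffunE.
by move: (h l); case: (x l); case: (y l).
Qed.

Lemma wt_mask (x y : cube d) : cube_le x y -> (wt (cmask x y) + wt x = wt y)%N.
Proof.
move=> /forallP h; rewrite /wt -big_split /=; apply: eq_bigr => l _; rewrite ffunE.
by move: (h l); case: (x l); case: (y l).
Qed.

Lemma wt_le (x y : cube d) : cube_le x y -> (wt x <= wt y)%N.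
Proof. by move=> h; rewrite -(wt_mask h) leq_addl. Qed.

Lemma wt_lt (x y : cube d) : cube_le x y -> x != y -> (wt x < wt y)%N.
Proof.
move=> h hne; rewrite ltn_neqAle wt_le // andbT; apply: contraNN hne => /eqP e.
have : wt (cmask x y) = 0%N by have := wt_mask h; rewrite e; lia.
move/eqP; rewrite /wt sum_nat_eq0 => /forallP hm.
rewrite -(cjoin_mask h); apply/eqP/ffunP => l; rewrite !ffunE.
by move: (hm l); rewrite ffunE; case: (x l); case: (y l).
Qed.

Lemma chain_wt (f : cube d -> bool) k c j : altch f c j -> (j <= k)%N ->
  (wt (c 0%N) + j <= wt (c j))%N.
Proof.
move=> hc _; elim: j hc => [|j IH] hc; first by rewrite addn0.
have hc' := altch_trunc hc (leqnSn j).
have := IH hc'; case: hc => H1 H2.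
have hlt := wt_lt (H1 j (ltnSn j)) (_ : c j != c j.+1).
rewrite addnS => h; apply: leq_ltn_trans h (hlt _).
by apply: contraNN (H2 j (ltnSn j)) => /eqP ->.
Qed.
End Geom.

Section Tester.
Variables (R : realType) (d k N b r : nat).

Definition sN := (2 * b * N + 1)%N.
Definition MT := {m : cube d | (wt m <= sN)%N}.
Definition QT := ('I_r * MT)%type.
Definition qn := #|{: QT}|.
Definition Om := {ffun 'I_r -> cube d}.
Definition pw (w : Om) : R := (#|{: Om}|%:R)^-1.
Definition Qf (w : Om) (i : 'I_qn) : cube d :=
  let p := enum_val i in cjoin (w p.1) (val p.2).
Definition Df (w : Om) (ans : 'I_qn -> bool) : bool :=
  ~~ `[< exists t : nat -> 'I_qn, ans (t 0%N) = true /\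
        forall i, (i < k)%N -> cube_le (Qf w (t i)) (Qf w (t i.+1)) /\ ans (t i) != ans (t i.+1) >].

Lemma card_cube : #|{: cube d}| = (2 ^ d)%N.
Proof. by rewrite card_ffun card_bool card_ord. Qed.

Lemma card_Om : #|{: Om}| = ((2 ^ d) ^ r)%N.
Proof. by rewrite !card_ffun !card_bool !card_ord. Qed.

Lemma sum_pw : \sum_(w : Om) pw w = 1.
Proof.
rewrite /pw sumr_const -[_ *+ _]mulr_natr mulVf // pnatr_eq0 card_Om -lt0n.
by rewrite !expn_gt0.
Qed.

Lemma complete f : k_monotone k f -> forall w, Df w (fun i => f (Qf w i)).
Proof.
move=> hf w; apply/negP => /asboolP [t [h0 ht]]; apply: hf.
exists (fun i => Qf w (t i)); split => // i hi; by case: (ht i hi).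
Qed.

Lemma accept_one f : k_monotone k f -> accept_prob pw Qf Df f = 1.
Proof.
move=> hf; rewrite /accept_prob -sum_pw; apply: eq_bigl => w; exact: complete.
Qed.

Definition Bd := [set x : cube d | inband N b x].

Lemma wt0 : (wt ([ffun _ => false] : cube d) <= sN)%N.
Proof. by rewrite /wt big1 // => i _; rewrite ffunE. Qed.

Definition m0 : MT := exist (fun m : cube d => (wt m <= sN)%N) _ wt0.

Lemma reject_bot f (w : Om) j : w j \in Bot k f Bd -> ~~ Df w (fun i => f (Qf w i)).
Proof.
rewrite inE => /asboolP [c [[h0 hin hc] ec]].
pose t i := enum_rank ((j, insubd m0 (cmask (w j) (c i))) : QT).
have hQ : forall i, (i <= k)%N -> Qf w (t i) = c i.
  move=> i hi; rewrite /Qf /t enum_rankK /=.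
  have hle : cube_le (w j) (c i) by rewrite -ec; apply: altch_le hc (leq0n _) hi.
  rewrite insubdK; first exact: cjoin_mask.
  rewrite unfold_in /=.
  have := wt_mask hle; have := hin i hi; have := hin 0%N (leq0n _).
  rewrite !inE /inband ec /sN; lia.
rewrite negbK; apply/asboolP; exists t; split; first by rewrite hQ.
move=> i hi; rewrite !hQ //; last exact: ltnW.
by case: hc => H1 H2; split; [apply: H1 | apply: H2].
Qed.
End Tester.

Lemma pow_third (R : realFieldType) (u : R) r : 0 <= u -> u <= 1 -> 2 <= r%:R * u ->
  (1 - u) ^+ r <= 1 / 3.
Proof.
move=> u0 u1 ru.
have hu1 : -1 <= u by lra.
have hb := bernoulli r hu1.
have h1 : 0 <= (1 - u) ^+ r by apply: exprn_ge0; lra.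
have h2 : (1 - u) ^+ r * (1 + u) ^+ r <= 1.
  have p0 : 0 <= (1 - u) * (1 + u) by apply: mulr_ge0; lra.
  have p1 : (1 - u) * (1 + u) <= 1.
    have : 0 <= u * u by apply: mulr_ge0.
    lra.
  by rewrite -exprMn; apply: exprn_ile1.
have : (1 - u) ^+ r * 3 <= (1 - u) ^+ r * (1 + u) ^+ r by apply: ler_wpM2l => //; lra.
lra.
Qed.

Section Sound.
Variables (R : realType) (d k N b r : nat) (eps : R).
Hypotheses (eps0 : 0 < eps) (heb : 8 <= eps * 4%:R ^+ b)
  (hr : 4 * (sN N b + 1)%:R <= r%:R * eps) (hN : (0 < N)%N) (hdN : (d <= N * N)%N).

Lemma sound f : far_from_k_monotone k eps f ->
  accept_prob (@pw R d r) (@Qf d N b r) (@Df d k N b r) f <= 1 / 3.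
Proof.
move=> hfar.
set B := Bd d N b.
have [g [hg hcnt]] := removal k f (leqnn #|B|).
have hd := hfar g hg; rewrite /dist in hd.
set X : R := (2 ^ d)%N%:R.
have X0 : 0 < X by rewrite ltr0n expn_gt0.
set M := #|[set x | f x != g x]|.
have eM : #|[pred x | f x != g x]| = M by apply: eq_card => x; rewrite inE.
rewrite eM ler_pdivlMr // in hd.
set O := #|~: B|.
set beta := #|Bot k f B|.
have hO : (O * 4 ^ b <= 2 ^ d.+2)%N.
  have e : O = #|[set x : cube d | ~~ inband N b x]|.
    by apply: eq_card => x; rewrite !inE.
  rewrite e; exact: band_out.
have hOR : O%:R * 4%:R ^+ b <= 4 * X :> R.
  have e4 : (2 ^ d.+2)%:R = 4 * X :> R by rewrite /X !expnS !natrM mulrA -natrM.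
  by rewrite -e4 -natrX -natrM ler_nat.
have hMR : M%:R <= O%:R + k.+1%:R * beta%:R :> R.
  by rewrite -natrM -natrD ler_nat.
have hO2 : O%:R * 8 <= eps * X * 4 :> R.
  have h0 : 0 <= O%:R :> R by apply: ler0n.
  have := ler_wpM2l h0 heb; have := ler_wpM2l (ltW eps0) hOR; nra.
have hkb : eps * X / 2 <= k.+1%:R * beta%:R :> R by lra.
have bpos : (0 < beta)%N.
  rewrite lt0n; apply/negP => /eqP hb0; move: hkb; rewrite hb0 mulr0.
  have : 0 < eps * X by apply: mulr_gt0.
  lra.
have hks : (k <= sN N b)%N.
  move: bpos; rewrite card_gt0 => /set0Pn [x]; rewrite inE => /asboolP [c [[h0 hin hc] _]].
  have := chain_wt hc (leqnn k).
  have := hin k (leqnn k); have := hin 0%N (leq0n _); rewrite !inE /inband /sN; lia.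
have hbr : 2 * X <= r%:R * beta%:R.
  have hk : k.+1%:R <= (sN N b + 1)%:R :> R by rewrite ler_nat addn1 ltnS.
  have hb0 : 0 <= beta%:R :> R by apply: ler0n.
  have h1 : eps * X * 2 <= 4 * (k.+1%:R * beta%:R) by lra.
  have h2 : 4 * (k.+1%:R * beta%:R) <= r%:R * eps * beta%:R.
    have := ler_wpM2r hb0 hr; have := ler_wpM2r hb0 hk; nra.
  have : eps * (X * 2) <= eps * (r%:R * beta%:R) by nra.
  rewrite ler_pM2l //; lra.
pose A := [pred w : Om d r | @Df d k N b r w (fun i => f (@Qf d N b r w i))].
have eacc : accept_prob (@pw R d r) (@Qf d N b r) (@Df d k N b r) f = #|A|%:R * (#|{: Om d r}|%:R)^-1.
  by rewrite /accept_prob sumr_const mulr_natl.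
have hA : (#|A| <= #|ffun_on_mem 'I_r (mem (~: Bot k f B))|)%N.
  apply: subset_leq_card; apply/subsetP => w; rewrite unfold_in /= => hw.
  apply/ffun_onP => j; rewrite inE; apply: contraNN hw => hj.
  by have := @reject_bot d k N b r f w j hj; rewrite /Df negbK.
rewrite card_ffun_on card_ord in hA.
have eC : #|~: Bot k f B|%:R = X - beta%:R :> R.
  have := cardsC (Bot k f B); rewrite card_cube => e.
  rewrite /X -e natrD; lra.
rewrite eacc card_Om natrX -/X.
have hA' : #|A|%:R <= (X - beta%:R) ^+ r :> R by rewrite -eC -natrX ler_nat.
have Xr0 : 0 < X ^+ r by apply: exprn_gt0.
have hY : 0 <= X - beta%:R by rewrite -eC ler0n.
apply: le_trans (_ : (X - beta%:R) ^+ r / X ^+ r <= _).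
  by rewrite ler_pM2r ?invr_gt0.
rewrite -expr_div_n.
have eu : (X - beta%:R) / X = 1 - beta%:R / X by rewrite mulrBl mulfV //; apply/eqP => h; lra.
rewrite eu; apply: pow_third.
- by apply: divr_ge0 => //; apply: ltW.
- by rewrite ler_pdivrMr // mul1r; lra.
- rewrite mulrA ler_pdivlMr //; lra.
Qed.
End Sound.

Lemma trivial_case (R : realType) d k (eps : R) : (1 <= k)%N -> 1 / 2 < eps ->
  exists (Om : finType) (p : Om -> R) (Q : Om -> 'I_0 -> cube d)
         (D : Om -> ('I_0 -> bool) -> bool), one_sided_na_tester k eps p Q D.
Proof.
move=> hk heps.
exists unit, (fun _ => 1), (fun _ _ => [ffun _ => false]), (fun _ _ => true).
have hs : \sum_(w : unit) (1 : R) = 1 by rewrite sumr_const card_unit.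
split => //.
move=> f hfar; exfalso.
have h0 : k_monotone k (fun _ : cube d => false) by move=> [c [h _ _]].
have h1 : k_monotone k (fun _ : cube d => true).
  move=> [c [_ _ hne]]; by have := hne 0%N hk; rewrite eqxx.
have := hfar _ h0; have := hfar _ h1; rewrite /Defs.dist.
have e : (#|[pred x : cube d | f x != false]| + #|[pred x : cube d | f x != true]| = 2 ^ d)%N.
  rewrite -(card_cube d) -(cardC [pred x : cube d | f x]); congr (_ + _)%N.
    by apply: eq_card => x; rewrite !inE; case: (f x).
  by apply: eq_card => x; rewrite !inE; case: (f x).
have X0 : 0 < (2 ^ d)%:R :> R by rewrite ltr0n expn_gt0.
rewrite !ler_pdivlMr //.
have : (#|[pred x : cube d | f x != false]| + #|[pred x : cube d | f x != true]|)%:R = (2 ^ d)%:R :> R by rewrite e.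
rewrite natrD; nra.
Qed.

Lemma lexp (m n e : nat) : (m <= n)%N -> (m ^ e <= n ^ e)%N.
Proof. by move=> h; elim: e => [|e IH] //; rewrite !expnS leq_mul. Qed.

Lemma qn_bound d N b r : (2 <= d)%N ->
  (qn d N b r <= r * (2 * (2 * d) ^ (sN N b)))%N.
Proof.
move=> hd; rewrite /qn card_prod card_ord leq_mul2l; apply/orP; right.
rewrite /MT card_sig.
have e : #|[pred x : cube d | (wt x <= sN N b)%N]| = #|[set m : cube d | (wt m <= sN N b)%N]|.
  by apply: eq_card => x; rewrite !inE.
rewrite e; apply: mask_count; lia.
Qed.

Lemma main_case (R : realType) d k (eps : R) : (2 <= d)%N -> 0 < eps -> eps <= 1 / 2 ->
  exists q : nat,
    q%:R <= expR ((100 / ln (2 : R)) * Num.sqrt (d%:R) * ln (d%:R) * ln (1 / eps)) /\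
    exists (Om : finType) (p : Om -> R) (Q : Om -> 'I_q -> cube d)
           (D : Om -> ('I_q -> bool) -> bool),
      one_sided_na_tester k eps p Q D.
Proof.
move=> hd eps0 eps12.
have exA : exists a, (1 <= eps * 2 ^+ a).
  have hi : 0 <= eps^-1 by rewrite invr_ge0 ltW.
  exists (Num.Def.archi_bound eps^-1).
  set n := Num.Def.archi_bound _.
  have h1 := archi_boundP hi; rewrite -/n in h1.
  have h2 : n%:R <= 2 ^+ n :> R.
    by rewrite -natrX ler_nat ltnW // ltn_expl.
  have : eps^-1 <= 2 ^+ n by lra.
  by rewrite -[eps^-1]mulr1 ler_pdivrMl.
case: (ex_minnP exA) => a ha hmina.
have a1 : (1 <= a)%N.
  rewrite lt0n; apply/negP => /eqP a0; move: ha; rewrite a0 expr0 mulr1; lra.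
have ha' : eps * 2 ^+ a.-1 < 1.
  rewrite ltNge; apply/negP => h; have := hmina _ h; case: (a) a1 => // a' _; by rewrite ltnn.
have exN : exists N, (d <= N * N)%N by exists d; rewrite leq_pmulr // ltnW.
case: (ex_minnP exN) => N hN hminN.
have N1 : (1 <= N)%N by rewrite lt0n; apply/negP => /eqP N0; move: hN; rewrite N0; lia.
have hN' : ((N.-1) * (N.-1) < d)%N.
  rewrite ltnNge; apply/negP => h; have := hminN _ h; case: (N) N1 => // N' _; by rewrite ltnn.
pose b := (a + 2)%N.
pose r := (4 * (sN N b + 1) * 2 ^ a)%N.
exists (qn d N b r); split; last first.
  exists (Om d r), (@pw R d r), (@Qf d N b r), (@Df d k N b r); split.
  - by move=> w; rewrite /pw invr_ge0 ler0n.
  - exact: sum_pw.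
  - by move=> f hf; apply: accept_one.
  - move=> f hf; apply: (sound eps0) => //.
    + rewrite /b exprD.
      have h4 : 2 ^+ a <= 4 ^+ a :> R by apply: lerXn2r; rewrite ?nnegrE //; lra.
      have : 0 <= eps by lra.
      have : 4 ^+ 2 = 16 :> R by rewrite expr2 -natrM.
      nra.
    + have e : r%:R = 4 * (sN N b + 1)%:R * 2 ^+ a :> R by rewrite /r !natrM natrX.
      rewrite e -mulrA; apply: ler_peMr; first by apply: mulr_ge0; [lra|apply: ler0n].
      by rewrite mulrC.
set s := sN N b.
have gen : forall s' : nat, (4 * (s' + 1) * 2 ^ a * (2 * (2 * d) ^ s') <= d ^ (3 * s' + 3 + a))%N.
  move=> s'.
  have h1 : (4 * (s' + 1) * 2 <= d ^ (s' + 3))%N.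
    apply: leq_trans (_ : 2 ^ (s' + 3) <= _)%N; last exact: lexp.
    have := ltn_expl s' (isT : (1 < 2)%N); rewrite expnD; lia.
  have h2 : (2 ^ a <= d ^ a)%N by apply: lexp; lia.
  have h3 : ((2 * d) ^ s' <= d ^ (2 * s'))%N.
    rewrite mulnC expnM; apply: lexp; rewrite -mulnn; apply: leq_mul => //; lia.
  have -> : (3 * s' + 3 + a = (s' + 3) + a + 2 * s')%N by lia.
  rewrite (expnD d (s' + 3 + a)) (expnD d (s' + 3)).
  have -> : (4 * (s' + 1) * 2 ^ a * (2 * (2 * d) ^ s') = (4 * (s' + 1) * 2) * 2 ^ a * (2 * d) ^ s')%N.
    by rewrite mulnCA !mulnA (mulnC _ 2) !mulnA; congr (_ * _)%N; rewrite -!mulnA; congr (_ * _)%N; rewrite mulnC.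
  by apply: leq_mul; [apply: leq_mul|].
have hq1 : (qn d N b r <= d ^ (3 * s + 3 + a))%N.
  apply: leq_trans (qn_bound N b r hd) _; exact: gen.
have hE : (3 * s + 3 + a <= 25 * a * N)%N by rewrite /s /sN /b; nia.
set E := (3 * s + 3 + a)%N.
have dR : 1 < d%:R :> R by rewrite ltr1n.
have hq2 : (qn d N b r)%:R <= expR (ln d%:R *+ E) :> R.
  rewrite -lnXn; last lra.
  rewrite lnK; last by rewrite posrE; apply: exprn_gt0; lra.
  by rewrite -natrX ler_nat.
apply: (le_trans hq2); rewrite ler_expR.
set L2 := ln (2 : R); set Le := ln (1 / eps); set Ld := ln (d%:R : R); set S := Num.sqrt (d%:R : R).
have L20 : 0 < L2 by apply: ln_gt0; lra.
have Ld0 : 0 <= Ld by apply: ln_ge0; lra.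
have ie : 2 <= 1 / eps.
  by rewrite ler_pdivlMr // mulrC -ler_pdivlMr //; lra.
have LeL2 : L2 <= Le by rewrite ler_ln ?posrE //; lra.
have haL : a%:R * L2 <= 2 * Le.
  have h : 2 ^+ a.-1 <= 1 / eps :> R.
    rewrite ler_pdivlMr // mulrC; lra.
  have p1 : (2 ^+ a.-1 : R) \in Num.pos by rewrite posrE exprn_gt0 //; lra.
  have p2 : (1 / eps) \in Num.pos by rewrite posrE; lra.
  have h' : ln (2 ^+ a.-1 : R) <= Le by rewrite /Le (ler_ln p1 p2).
  rewrite lnXn in h'; last lra.
  rewrite -(mulr_natr (ln (2:R)) a.-1) -/L2 in h'.
  have -> : a%:R = a.-1%:R + 1 :> R by rewrite natr1 prednK.
  rewrite mulrDl mul1r (mulrC _ L2).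
  lra.
have S1 : 1 <= S by rewrite /S -[X in X <= _]sqrtr1 ler_sqrt ?ler0n //; lra.
have hNS : N%:R <= 2 * S :> R.
  have : N.-1%:R < S :> R.
    rewrite ltNge; apply/negP => h.
    have : S ^+ 2 <= N.-1%:R ^+ 2 by apply: lerXn2r => //; rewrite nnegrE; lra.
    rewrite sqr_sqrtr ?ler0n // -natrX ler_nat -mulnn; lia.
  have -> : N%:R = N.-1%:R + 1 :> R by rewrite natr1 prednK.
  lra.
have hER : E%:R <= 25 * a%:R * N%:R :> R by rewrite -[25]/(25%:R) -!natrM ler_nat.
have a0 : 0 <= a%:R :> R by apply: ler0n.
have N0 : 0 <= N%:R :> R by apply: ler0n.
have key : E%:R * L2 <= 100 * S * Le.
  have t1 : E%:R * L2 <= 25 * N%:R * (a%:R * L2).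
    have := ler_wpM2r (ltW L20) hER; rewrite -!mulrA (mulrCA a%:R).
    by [].
  have t2 : 25 * N%:R * (a%:R * L2) <= 25 * N%:R * (2 * Le).
    by apply: ler_wpM2l => //; apply: mulr_ge0 => //; lra.
  have Le0 : 0 <= Le by lra.
  have t3 : 25 * N%:R * (2 * Le) <= 25 * (2 * S) * (2 * Le).
    apply: ler_wpM2r; first lra.
    by apply: ler_wpM2l => //; lra.
  lra.
have key' : E%:R <= 100 / L2 * S * Le.
  have -> : 100 / L2 * S * Le = (100 * S * Le) / L2 by ring.
  by rewrite ler_pdivlMr.
rewrite -(mulr_natr Ld E).
have -> : 100 / L2 * S * Ld * Le = Ld * (100 / L2 * S * Le) by ring.
by apply: ler_wpM2l.
Qed.

Theorem theorem1p2 (R : realType) :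
  exists C : R, 0 < C /\
  forall (d k : nat) (eps : R), (2 <= d)%N -> (1 <= k)%N -> 0 < eps -> eps < 1 ->
  exists q : nat,
    q%:R <= expR (C * Num.sqrt (d%:R) * ln (d%:R) * ln (1 / eps)) /\
    exists (Om : finType) (p : Om -> R) (Q : Om -> 'I_q -> cube d)
           (D : Om -> ('I_q -> bool) -> bool),
      one_sided_na_tester k eps p Q D.
Proof.
exists (100 / ln (2 : R)); split.
  apply: divr_gt0 => //; apply: ln_gt0; lra.
move=> d k eps hd hk eps0 eps1.
case: (lerP eps (1 / 2)) => h.
  exact: main_case.
exists 0%N; split; first by rewrite expR_ge0.
exact: trivial_case.
Qed.
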